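(* For integers $n\ge j\ge 1$, \[ \sum_{k=j}^{n}\genfrac{[}{]}{0pt}{}{n+1}{k+1}\genfrac{\{}{\}}{0pt}{}{k}{j}\,k=\binom{n+1}{j}\frac{n!}{(j-1)!}\left(H_{n+1}-H_{j}\right). \]
   Context: $\genfrac{\{}{\}}{0pt}{}{n}{k}$ denotes the Stirling numbers of the second kind, $\genfrac{[}{]}{0pt}{}{n}{k}$ the unsigned Stirling numbers of the first kind, and $H_n=\sum_{i=1}^n 1/i$ the harmonic numbers. *)

(* Defs.v *)
From mathcomp Require Import all_boot all_order all_algebra.
Set Implicit Arguments. Unset Strict Implicit. Unset Printing Implicit Defensive.
Import GRing.Theory Num.Theory.

Fixpoint stirling1 (n k : nat) : nat :=
  match n, k with
  | 0, 0 => 1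
  | 0, _.+1 => 0
  | _.+1, 0 => 0
  | n'.+1, k'.+1 => n' * stirling1 n' k'.+1 + stirling1 n' k'
  end.

Fixpoint stirling2 (n k : nat) : nat :=
  match n, k with
  | 0, 0 => 1
  | 0, _.+1 => 0
  | _.+1, 0 => 0
  | n'.+1, k'.+1 => k'.+1 * stirling2 n' k'.+1 + stirling2 n' k'
  end.

Definition harmonic (n : nat) : rat := \sum_(1 <= i < n.+1) (i%:R)^-1.

(* Main.v *)
Require Import Defs.
From mathcomp Require Import all_boot all_order all_algebra.
From mathcomp Require Import ring lra.
Import GRing.Theory Num.Theory.
Local Open Scope ring_scope.

Lemma s1S n k : stirling1 n.+1 k.+1 = (n * stirling1 n k.+1 + stirling1 n k)%N.
Proof. by []. Qed.
Lemma s2S n k : stirling2 n.+1 k.+1 = (k.+1 * stirling2 n k.+1 + stirling2 n k)%N.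
Proof. by []. Qed.

Lemma s1_small n k : (n < k)%N -> stirling1 n k = 0%N.
Proof.
elim: n k => [|n IH] [|k] //= H.
by rewrite !IH ?muln0 // ltnW.
Qed.

Lemma s2_small n k : (n < k)%N -> stirling2 n k = 0%N.
Proof.
elim: n k => [|n IH] [|k] //= H.
by rewrite !IH ?muln0 // ltnW.
Qed.

Arguments stirling1 : simpl never.
Arguments stirling2 : simpl never.

Lemma rec1 n (g : nat -> rat) :
  \sum_(k < n.+2) (stirling1 n.+2 k.+1)%:R * g k =
  n.+1%:R * \sum_(k < n.+1) (stirling1 n.+1 k.+1)%:R * g k
  + \sum_(k < n.+1) (stirling1 n.+1 k.+1)%:R * g k.+1.
Proof.
under eq_bigr => k _ do rewrite s1S natrD natrM mulrDl.
rewrite big_split /=; congr (_ + _).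
  rewrite big_ord_recr /= s1_small // mulr0 mul0r addr0 mulr_sumr.
  by apply: eq_bigr => k _; rewrite mulrA.
by rewrite big_ord_recl /= (_ : stirling1 n.+1 0 = 0%N) // mul0r add0r.
Qed.

Definition A n j : rat := \sum_(k < n.+1) (stirling1 n.+1 k.+1)%:R * (stirling2 k j)%:R.
Definition T n j : rat :=
  \sum_(k < n.+1) (stirling1 n.+1 k.+1)%:R * ((stirling2 k j)%:R * k%:R).

Lemma A_rec0 n : A n.+1 0 = n.+1%:R * A n 0.
Proof.
rewrite /A (rec1 n (fun k => (stirling2 k 0)%:R)) [X in _ + X]big1 ?addr0 // => k _.
by rewrite (_ : stirling2 k.+1 0 = 0%N) // mulr0. Qed.

Lemma A_rec n i : A n.+1 i.+1 = (n + i).+2%:R * A n i.+1 + A n i.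
Proof.
rewrite /A (rec1 n (fun k => (stirling2 k i.+1)%:R)).
under [X in _ + X = _]eq_bigr => k _ do rewrite s2S natrD natrM mulrDr mulrCA.
rewrite big_split /= -mulr_sumr addrA -mulrDl; congr (_ * _ + _).
by rewrite -natrD addSn addnS.
Qed.

Lemma T_0 n : T n 0 = 0.
Proof.
rewrite /T big1 // => -[[|k] Hk] _ /=; first by rewrite !mulr0.
by rewrite (_ : stirling2 k.+1 0 = 0%N) // mul0r mulr0.
Qed.

Lemma T_rec n i : T n.+1 i.+1 =
  (n + i).+2%:R * T n i.+1 + T n i + i.+1%:R * A n i.+1 + A n i.
Proof.
rewrite /T /A (rec1 n (fun k => (stirling2 k i.+1)%:R * k%:R)).
under [X in _ + X = _]eq_bigr => k _ do
  rewrite s2S natrD natrM -!natr1 !(mulrDr, mulrDl) !mulr1 !mulrA.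
rewrite !big_split /=.
rewrite !mulr_sumr -!big_split /=; apply: eq_bigr => k _.
rewrite -!natr1 natrD; ring.
Qed.

Lemma K1 n k : (k.+1 * 'C(n,k.+1) + k * 'C(n,k) = n * 'C(n,k))%N.
Proof.
rewrite mul_bin_left; case: (leqP k n) => h; first by rewrite -mulnDl subnK.
by rewrite bin_small // !muln0.
Qed.

Lemma K2 n k : (n.+1 * 'C(n,k) + k * 'C(n.+1,k) = n.+1 * 'C(n.+1,k))%N.
Proof.
have := mul_bin_down n.+1 k; rewrite /= => ->.
case: (leqP k n.+1) => h; first by rewrite -mulnDl subnK.
by rewrite bin_small // !muln0.
Qed.

Lemma snz m : (m.+1)%:R != 0 :> rat.
Proof. by rewrite pnatr_eq0. Qed.
Lemma fnz m : (m`!)%:R != 0 :> rat.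
Proof. by rewrite pnatr_eq0 -lt0n fact_gt0. Qed.

Lemma fpos m : 0 < (m`!)%:R :> rat.
Proof. by rewrite ltr0n fact_gt0. Qed.

Ltac gen_pos :=
  repeat match goal with
  | |- context [ ((?m)`!)%:R ] =>
      let h := fresh "h" in have h := fpos m; move: h;
      let x := fresh "x" in set x := ((m`!)%:R : rat); clearbody x
  end;
  repeat match goal with
  | |- context [ (?m)%:R ] =>
      let h := fresh "h" in have h := ler0n rat m; move: h;
      let x := fresh "x" in set x := (m%:R : rat); clearbody x
  end; intros.

Ltac nz := try done; (repeat (apply/andP; split)); repeat apply: mulf_neq0; try apply: invr_neq0;
  first [ exact: fnz | (apply: lt0r_neq0; gen_pos; nra) ].

Lemma R1 n k : 'C(n,k.+1)%:R = (n%:R - k%:R) * 'C(n,k)%:R / k.+1%:R :> rat.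
Proof.
have := congr1 (fun x => x%:R : rat) (K1 n k); rewrite /= natrD !natrM => h.
rewrite mulrBl -h; field; nz.
Qed.

Lemma R2 n k : 'C(n,k)%:R = (n.+1%:R - k%:R) * 'C(n.+1,k)%:R / n.+1%:R :> rat.
Proof.
have := congr1 (fun x => x%:R : rat) (K2 n k); rewrite /= natrD !natrM => h.
rewrite mulrBl -h; field; nz.
Qed.

Definition a n j : rat := 'C(n,j)%:R * (n`!)%:R / (j`!)%:R.

Lemma A_closed n j : A n j = a n j.
Proof.
elim: n j => [|n IH] j.
  rewrite /A /a big_ord1 (_ : stirling1 1 1 = 1%N) // mul1r.
  case: j => [|j]; first by rewrite (_ : stirling2 0 0 = 1%N) // bin0 fact0 divrr ?mulr1 ?oner_neq0.
  by rewrite (_ : stirling2 0 j.+1 = 0%N) // bin0n /= !mul0r.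
case: j => [|i].
  by rewrite A_rec0 IH /a !bin0 !fact0 factS natrM; field; nz.
rewrite A_rec !IH /a binS !factS !natrM.
rewrite natrD !R1 -!natr1 !natrD.
field; nz.
Qed.

Definition t n m : rat :=
  'C(n.+1,m.+1)%:R * (n`!)%:R / (m`!)%:R * (harmonic n.+1 - harmonic m.+1).

Lemma hS m : harmonic m.+1 = harmonic m + (m.+1%:R)^-1.
Proof. by rewrite /harmonic big_nat_recr. Qed.

Lemma T_closed n m : T n m.+1 = t n m.
Proof.
elim: n m => [|n IH] m.
  have -> : T 0 m.+1 = 0 by rewrite /T big_ord1 /= mulr0n !mulr0.
  rewrite /t.
  case: m => [|m]; first by rewrite subrr mulr0.
  by rewrite bin_small // !mul0r.
rewrite T_rec.
case: m => [|p].
  rewrite T_0 IH !A_closed /t /a addr0 (hS n.+1) !bin1 !bin0 !factS !fact0 !natrM.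
  rewrite -!natr1 !natrD.
  field; nz.
rewrite !IH !A_closed /t /a (binS n.+1 p.+1) (natrD _ 'C(n.+1,p.+2)).
rewrite (R1 n.+1 p.+1) (R1 n p.+1) (R2 n p.+1).
set B := 'C(n.+1, p.+1); clearbody B.
rewrite (hS n.+1) (hS p.+1) !factS !natrM.
rewrite -!natr1 !natrD.
field; nz.
Qed.

Theorem theorem3 (n j : nat) (hj : (1 <= j)%N) (hjn : (j <= n)%N) :
  \sum_(j <= k < n.+1) ((stirling1 n.+1 k.+1 * stirling2 k j * k)%N)%:R
  = ('C(n.+1, j))%:R * ((n`!)%:R / ((j.-1)`!)%:R) * (harmonic n.+1 - harmonic j)
    :> rat.
Proof.
have -> : \sum_(j <= k < n.+1) ((stirling1 n.+1 k.+1 * stirling2 k j * k)%N)%:R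
   = T n j :> rat.
  rewrite /T -(big_mkord xpredT (fun k => (stirling1 n.+1 k.+1)%:R * ((stirling2 k j)%:R * k%:R))).
  rewrite [RHS](big_cat_nat (n:=j)) //=; last exact: leqW.
  rewrite [X in _ = X + _]big_nat_cond [X in _ = X + _]big1 ?add0r.
    by apply: eq_bigr => k _; rewrite !natrM mulrA.
  by move=> k /andP [/andP [_ hk] _]; rewrite s2_small // mul0r mulr0.
case: j hj hjn => // m _ _.
by rewrite T_closed /t mulrA.
Qed.
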